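(* Suppose there is a sequence of positive numbers $(c_N)_{N\ge1}$ with $\lim_{N\to\infty}c_N^{1/N}=1$ such that for every $N\in\mathbb N$ and all origin-symmetric convex sets $K,T\subseteq\mathbb R^N$, \[ \gamma_N(K+T)\,\gamma_N(K\cap T)\ge c_N\,\gamma_N(K)\,\gamma_N(T). \] Then for every $d\ge1$ and all origin-symmetric convex sets $K,T\subseteq\mathbb R^d$, \[ \gamma_d(K+T)\,\gamma_d(K\cap T)\ge \gamma_d(K)\,\gamma_d(T). \]
   Context: $\gamma_m$ denotes the standard Gaussian probability measure on $\mathbb R^m$, with density proportional to $e^{-\|x\|^2/2}$. $K+T=\{x+y:x\in K,\ y\in T\}$ is the Minkowski sum. A set $K$ is origin-symmetric if $K=-K$. *)

(* Defs.v *)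
From HB Require Import structures.
From mathcomp Require Import all_boot all_order all_algebra.
From mathcomp Require Import all_classical all_reals all_analysis.
Set Implicit Arguments. Unset Strict Implicit. Unset Printing Implicit Defensive.
Import Order.TTheory GRing.Theory Num.Theory.
Import numFieldNormedType.Exports.
Local Open Scope classical_set_scope.
Local Open Scope ring_scope.

(* By Fubini–Tonelli this is the product measure gamma_1^{\otimes N}, i.e. the
   measure with density (2 pi)^{-N/2} e^{-|x|^2/2}, on every (Lebesgue)
   measurable set, in particular on convex sets. *)
Fixpoint gauss {R : realType} (N : nat) : set 'rV[R]_N -> \bar R :=
  match N with
  | 0 => fun A => (\1_A (0 : 'rV[R]_0))%:E
  | N'.+1 => fun A =>
      (\int[normal_prob (0:R) 1]_x
          @gauss R N' [set v : 'rV[R]_N' | A (row_mx (\row_(_ < 1) (x : R)) v)])%E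
  end.

Definition convex_rV {R : realType} (N : nat) (K : set 'rV[R]_N) : Prop :=
  forall x y (t : R), K x -> K y -> 0 <= t -> t <= 1 ->
    K (t *: x + (1 - t) *: y).

Definition symmetric_rV {R : realType} (N : nat) (K : set 'rV[R]_N) : Prop :=
  K = [set x | K (- x)].

Definition minkowski_sum {R : realType} (N : nat) (K T : set 'rV[R]_N)
  : set 'rV[R]_N := [set z | exists x y, K x /\ T y /\ z = x + y].

(* Main.v *)
Require Import Defs.
From HB Require Import structures.
From mathcomp Require Import all_boot all_order all_algebra.
From mathcomp Require Import all_classical all_reals all_analysis.
From mathcomp Require Import zify.
Import Order.TTheory GRing.Theory Num.Theory.
Import numFieldNormedType.Exports.
Local Open Scope classical_set_scope.
Local Open Scope ring_scope.


Section IntLemmas.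
Local Open Scope ereal_scope.
Context d (T : measurableType d) (R : realType).
Variable mu : {measure set T -> \bar R}.
Import HBNNSimple.

Lemma int_le (f g : T -> \bar R) : (forall x, 0 <= f x) -> (forall x, f x <= g x) ->
  \int[mu]_x f x <= \int[mu]_x g x.
Proof.
move=> f0 fg.
have g0 : forall x, 0 <= g x by move=> x; exact: le_trans (f0 x) (fg x).
rewrite !ge0_integralTE//; apply: ereal_sup_le => _ [h hf <-].
exists h => //= x; exact: le_trans (hf x) (fg x).
Qed.

Lemma int_scale_le (k : R) (f : T -> \bar R) : (0 < k)%R -> (forall x, 0 <= f x) ->
  \int[mu]_x (k%:E * f x) <= k%:E * \int[mu]_x f x.
Proof.
move=> k0 f0.
have kf0 : forall x, 0 <= k%:E * f x by move=> x; rewrite mule_ge0// lee_fin ltW.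
rewrite !ge0_integralTE//; apply: ge_ereal_sup => _ [h hf <-].
have ki0 : (0 <= k^-1)%R by rewrite invr_ge0 ltW.
pose h' := scale_nnsfun h ki0.
have -> : sintegral mu h = k%:E * sintegral mu h'.
  rewrite /h' /scale_nnsfun.
  have := sintegralrM mu k^-1 h => /= ->.
  by rewrite muleA -EFinM divff ?gt_eqF// mul1e.
rewrite lee_pmul2l ?lte_fin//; apply: ereal_sup_ubound; exists h' => //= x.
have := hf x; rewrite /h' /= => hx.
rewrite EFinM -(@lee_pmul2l _ k%:E) ?lte_fin// muleA -EFinM divff ?gt_eqF// mul1r.
exact: hx.
Qed.

Lemma int_scale (k : R) (f : T -> \bar R) : (0 <= k)%R -> (forall x, 0 <= f x) ->
  \int[mu]_x (k%:E * f x) = k%:E * \int[mu]_x f x.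
Proof.
move=> k0 f0; have [->|kp] := eqVneq k 0%R.
  rewrite mul0e; under eq_integral do rewrite mul0e; exact: integral0.
have kp' : (0 < k)%R by rewrite lt_neqAle eq_sym kp.
apply/le_anti; rewrite int_scale_le//=.
have ki : (0 < k^-1)%R by rewrite invr_gt0.
have := @int_scale_le k^-1 (fun x => k%:E * f x) ki.
have -> : (fun x => k^-1%:E * (k%:E * f x)) = f.
  by apply/funext => x; rewrite muleA -EFinM mulVf ?gt_eqF// mul1e.
move=> /(_ (fun x => mule_ge0 (ltW _) (f0 x))) H.
rewrite -(@lee_pmul2l _ k^-1%:E) ?lte_fin// muleA -EFinM mulVf ?gt_eqF// mul1e.
by apply: H; rewrite lte_fin.
Qed.
End IntLemmas.
Arguments int_le {d T R mu}.
Arguments int_scale_le {d T R mu}.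
Arguments int_scale {d T R mu}.

Section G.
Variable R : realType.
Local Open Scope ereal_scope.

Lemma gauss_ge0 N (A : set 'rV[R]_N) : 0 <= gauss A.
Proof.
elim: N A => [|N IH] A /=; first by rewrite lee_fin indicE.
by apply: integral_ge0 => x _.
Qed.

Lemma gauss_le1 N (A : set 'rV[R]_N) : gauss A <= 1.
Proof.
elim: N A => [|N IH] A /=.
  by rewrite lee_fin indicE; case: (_ \in _).
have H := @int_le _ _ _ (normal_prob (0:R) 1) (fun x => gauss [set v | A (row_mx (\row_(_ < 1) x) v)]) (fun=> 1) (fun x => gauss_ge0 _ _) (fun x => IH _). apply: le_trans H _.
rewrite integral_cst//= mul1e probability_setT//.
Qed.

Lemma gauss_fin N (A : set 'rV[R]_N) : gauss A = (fine (gauss A))%:E.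
Proof.
rewrite fineK// ge0_fin_numE ?gauss_ge0//.
exact: le_lt_trans (gauss_le1 _ A) (ltry _).
Qed.

Lemma gauss0 N : gauss (set0 : set 'rV[R]_N) = 0.
Proof.
elim: N => [|N IH] /=; first by rewrite indicE in_set0.
have -> : (fun x : R => @gauss R N [set v | set0 (row_mx (\row_(_ < 1) x) v)]) = cst 0.
  by apply/funext => x; exact: IH.
exact: integral0.
Qed.

Lemma gauss_setT N : gauss (setT : set 'rV[R]_N) = 1.
Proof.
elim: N => [|N IH] /=; first by rewrite indicE in_setT.
have -> : (fun x : R => @gauss R N [set v | setT (row_mx (\row_(_ < 1) x) v)]) = cst 1.
  by apply/funext => x; exact: IH.
rewrite integral_cst//= mul1e probability_setT//.
Qed.
End G.

Section P.
Variable R : realType.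

Definition prodS a b (A : set 'rV[R]_a) (B : set 'rV[R]_b) : set 'rV[R]_(a + b) :=
  [set w | A (lsubmx w) /\ B (rsubmx w)].

Lemma lsub_row a b (r : 'rV[R]_1) (v : 'rV[R]_(a + b)) :
  @lsubmx R 1 a.+1 b (row_mx r v) = row_mx r (lsubmx v).
Proof.
apply/rowP => j; rewrite !mxE.
case: splitP => k hk; case: splitP => k' hk' /=.
- congr (r _ _); apply/val_inj; rewrite /= -hk -hk'//.
- by move: (ltn_ord k) hk hk' => /= kl hj hj'; move: kl; rewrite -hj hj'.
- by move: (ltn_ord k') hk hk' => /= kl hj hj'; move: kl; rewrite -hj' hj.
- rewrite mxE; congr (v _ _); apply/val_inj => /=.
  by move: hk hk'; rewrite /= => -> [].
Qed.

Lemma rsub_row a b (r : 'rV[R]_1) (v : 'rV[R]_(a + b)) :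
  @rsubmx R 1 a.+1 b (row_mx r v) = rsubmx v.
Proof.
apply/rowP => j; rewrite !mxE.
case: splitP => k hk /=.
- by move: (ltn_ord k) hk => /=; lia.
- congr (v _ _); apply/val_inj => /=.
  by move: hk; rewrite /= => -[].
Qed.
End P.
Arguments prodS {R a b}.
Arguments lsub_row {R a b}.
Arguments rsub_row {R a b}.
Section P2.
Variable R : realType.
Local Open Scope ereal_scope.

Lemma rsub0 b (w : 'rV[R]_(0 + b)) : @rsubmx R 1 0 b w = w.
Proof. by apply/rowP => j; rewrite mxE; congr (w _ _); apply/val_inj. Qed.

Lemma gauss_prod a b (A : set 'rV[R]_a) (B : set 'rV[R]_b) :
  gauss (prodS A B) = gauss A * gauss B.
Proof.
elim: a A => [|a IH] A.
  change (@gauss R b (prodS A B) = (\1_A (0%R : 'rV[R]_0))%:E * gauss B).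
  rewrite indicE; have [A0|A0] := pselect (A 0%R).
    have -> : prodS A B = B.
      apply/funext => w; apply/propext; rewrite /prodS /= rsub0 thinmx0.
      by split => [[]|].
    by rewrite mem_set// mul1e.
  have -> : prodS A B = set0.
    apply/funext => w; apply/propext; rewrite /prodS /= thinmx0.
    by split => [[]|].
  by rewrite memNset// mul0e gauss0.
change (@gauss R (a + b).+1 (prodS A B) = gauss A * gauss B).
rewrite /=.
have E x : [set v : 'rV[R]_(a + b) | prodS A B (row_mx (\row_(_ < 1) x) v)] =
    prodS [set u | A (row_mx (\row_(_ < 1) x) u)] B.
  by apply/funext => v; apply/propext; rewrite /prodS /= lsub_row rsub_row.
under eq_integral do rewrite E IH.
rewrite [gauss B]gauss_fin.
under eq_integral do rewrite muleC.
rewrite int_scale ?fine_ge0 ?gauss_ge0//; first by rewrite muleC.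
move=> x; exact: gauss_ge0.
Qed.
End P2.

Set Implicit Arguments. Unset Strict Implicit.

Section Q.
Variable R : realType.

Lemma lsubD a b (x y : 'rV[R]_(a + b)) : lsubmx (x + y) = lsubmx x + lsubmx y.
Proof. by rewrite -[x]hsubmxK -[y]hsubmxK add_row_mx !row_mxKl. Qed.
Lemma rsubD a b (x y : 'rV[R]_(a + b)) : rsubmx (x + y) = rsubmx x + rsubmx y.
Proof. by rewrite -[x]hsubmxK -[y]hsubmxK add_row_mx !row_mxKr. Qed.
Lemma lsubZ a b t (x : 'rV[R]_(a + b)) : lsubmx (t *: x) = t *: lsubmx x.
Proof. by rewrite -[x]hsubmxK scale_row_mx !row_mxKl. Qed.
Lemma rsubZ a b t (x : 'rV[R]_(a + b)) : rsubmx (t *: x) = t *: rsubmx x.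
Proof. by rewrite -[x]hsubmxK scale_row_mx !row_mxKr. Qed.
Lemma lsubN a b (x : 'rV[R]_(a + b)) : lsubmx (- x) = - lsubmx x.
Proof. by rewrite -[x]hsubmxK opp_row_mx !row_mxKl. Qed.
Lemma rsubN a b (x : 'rV[R]_(a + b)) : rsubmx (- x) = - rsubmx x.
Proof. by rewrite -[x]hsubmxK opp_row_mx !row_mxKr. Qed.

Lemma mink_prod a b (A C : set 'rV[R]_a) (B D : set 'rV[R]_b) :
  minkowski_sum (prodS A B) (prodS C D) =
  prodS (minkowski_sum A C) (minkowski_sum B D).
Proof.
apply/funext => z; apply/propext; split.
  move=> [x [y [[Ax Bx] [[Cy Dy] ->]]]]; split.
    by exists (lsubmx x), (lsubmx y); rewrite lsubD.
  by exists (rsubmx x), (rsubmx y); rewrite rsubD.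
move=> [[x1 [y1 [Ax1 [Cy1 e1]]]] [x2 [y2 [Bx2 [Dy2 e2]]]]].
exists (row_mx x1 x2), (row_mx y1 y2); split; first by rewrite /prodS /= row_mxKl row_mxKr.
split; first by rewrite /prodS /= row_mxKl row_mxKr.
by rewrite add_row_mx -e1 -e2 hsubmxK.
Qed.

Lemma inter_prod a b (A C : set 'rV[R]_a) (B D : set 'rV[R]_b) :
  prodS A B `&` prodS C D = prodS (A `&` C) (B `&` D).
Proof.
apply/funext => z; apply/propext; rewrite /prodS /=; split.
  by move=> [[? ?] [? ?]].
by move=> [[? ?] [? ?]].
Qed.

Lemma convex_prod a b (A : set 'rV[R]_a) (B : set 'rV[R]_b) :
  convex_rV A -> convex_rV B -> convex_rV (prodS A B).
Proof.
move=> cA cB x y t [Ax Bx] [Ay By] t0 t1; split.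
  by rewrite lsubD !lsubZ; apply: cA.
by rewrite rsubD !rsubZ; apply: cB.
Qed.

Lemma sym_iff N (A : set 'rV[R]_N) : symmetric_rV A -> forall u, A u <-> A (- u).
Proof. by move=> hA u; rewrite {1}hA. Qed.

Lemma sym_prod a b (A : set 'rV[R]_a) (B : set 'rV[R]_b) :
  symmetric_rV A -> symmetric_rV B -> symmetric_rV (prodS A B).
Proof.
move=> sA sB; have hA := sym_iff sA; have hB := sym_iff sB; apply/funext => x; apply/propext.
rewrite /prodS /= lsubN rsubN; split; move=> [h1 h2]; split.
- exact: (hA _).1 h1.
- exact: (hB _).1 h2.
- exact: (hA _).2 h1.
- exact: (hB _).2 h2.
Qed.

Fixpoint dimp (d m : nat) : nat := if m is m'.+1 then (d + dimp d m')%N else 0%N.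

Unset Implicit Arguments.
Fixpoint powS d (K : set 'rV[R]_d) m : set 'rV[R]_(dimp d m) :=
  match m as m0 return set 'rV[R]_(dimp d m0) with
  | 0 => setT
  | m'.+1 => @prodS R d (dimp d m') K (powS d K m')
  end.
Arguments powS {d}.
Set Implicit Arguments.

Lemma dimpE d m : dimp d m = (d * m)%N.
Proof. by elim: m => [|m IH] /=; rewrite ?muln0 // IH mulnS. Qed.

Lemma gauss_pow d (K : set 'rV[R]_d) m :
  gauss (powS K m) = ((fine (gauss K)) ^+ m)%:E.
Proof.
elim: m => [|m IH]; first by rewrite /= indicE in_setT expr0.
by rewrite gauss_prod IH [gauss K]gauss_fin -EFinM exprS.
Qed.

Lemma mink_pow d (K T : set 'rV[R]_d) m :
  minkowski_sum (powS K m) (powS T m) = powS (minkowski_sum K T) m.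
Proof.
elim: m => [|m IH] /=; last by rewrite mink_prod IH.
apply/funext => z; apply/propext; split => // _.
by exists z, 0; rewrite addr0.
Qed.

Lemma inter_pow d (K T : set 'rV[R]_d) m :
  powS K m `&` powS T m = powS (K `&` T) m.
Proof.
elim: m => [|m IH] /=; last by rewrite inter_prod IH.
by rewrite setIT.
Qed.

Lemma convex_pow d (K : set 'rV[R]_d) m : convex_rV K -> convex_rV (powS K m).
Proof.
move=> cK; elim: m => [|m IH] /=; last exact: convex_prod.
by [].
Qed.

Lemma sym_pow d (K : set 'rV[R]_d) m : symmetric_rV K -> symmetric_rV (powS K m).
Proof.
move=> sK; elim: m => [|m IH] /=; last exact: sym_prod.
by apply/funext => x; apply/propext.
Qed.
End Q.

Unset Implicit Arguments. Set Strict Implicit.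

Lemma final_real (R : realType) (c : nat -> R) (d : nat) (a b : R) :
  (0 < d)%N -> (forall N : nat, (0 < N)%N -> 0 < c N) ->
  ((fun N : nat => c N `^ (N%:R)^-1) @ \oo --> (1 : R)) ->
  0 <= a -> 0 <= b ->
  (forall m, (0 < m)%N -> c (d * m)%N * b ^+ m <= a ^+ m) -> b <= a.
Proof.
move=> d0 c0 hlim a0 b0 H.
rewrite leNgt; apply/negP => ab.
have bp : 0 < b by exact: le_lt_trans a0 ab.
pose r := a / b.
have r0 : 0 <= r by rewrite divr_ge0.
have r1 : r < 1 by rewrite ltr_pdivrMr// mul1r.
pose e : R := (d%:R)^-1.
have e0 : 0 < e by rewrite invr_gt0 ltr0n.
pose s := r `^ e.
have s1 : s < 1.
  have := gt0_ltr_powR e0 (x:=r) (y:=1); rewrite powR1; apply => //.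
  by rewrite nnegrE.
have := cvgr_gt _ hlim _ s1 => -[N0 _ HN].
pose m := N0.+1.
have m0 : (0 < m)%N by [].
have hN : (N0 <= d * m)%N.
  by rewrite (leq_trans (leqnSn N0))// leq_pmull.
have := HN _ hN; rewrite /= ltNge => /negP; apply.
have dm0 : (0 < d * m)%N by rewrite muln_gt0 d0.
have cle : c (d * m)%N <= r ^+ m.
  rewrite /r expr_div_n ler_pdivlMr ?exprn_gt0//.
  exact: H.
rewrite /s.
have -> : e = m%:R * ((d * m)%N%:R)^-1.
  by rewrite /e natrM invfM mulrCA mulfV ?mulr1// pnatr_eq0 -lt0n.
rewrite powRrM powR_mulrn//.
apply: ge0_ler_powR => //.
- by rewrite nnegrE ltW// c0.
- by rewrite nnegrE exprn_ge0.
Qed.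

Theorem theorem1p6 (R : realType) (c : nat -> R) :
  (forall N : nat, (0 < N)%N -> 0 < c N) ->
  ((fun N : nat => c N `^ (N%:R)^-1) @ \oo --> (1 : R)) ->
  (forall (N : nat) (K T : set 'rV[R]_N), (0 < N)%N ->
     convex_rV K -> symmetric_rV K -> convex_rV T -> symmetric_rV T ->
     (gauss (minkowski_sum K T) * gauss (K `&` T)
        >= (c N)%:E * gauss K * gauss T)%E) ->
  forall (d : nat) (K T : set 'rV[R]_d), (0 < d)%N ->
     convex_rV K -> symmetric_rV K -> convex_rV T -> symmetric_rV T ->
     (gauss (minkowski_sum K T) * gauss (K `&` T)
        >= gauss K * gauss T)%E.
Proof.
move=> c0 hlim hyp d K T d0 cK sK cT sT.
rewrite (gauss_fin _ _ (minkowski_sum K T)) (gauss_fin _ _ (K `&` T)) (gauss_fin _ _ K) (gauss_fin _ _ T).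
rewrite -!EFinM lee_fin.
apply: (@final_real R c d _ _ d0 c0 hlim).
- by rewrite mulr_ge0// fine_ge0// gauss_ge0.
- by rewrite mulr_ge0// fine_ge0// gauss_ge0.
move=> m m0.
have dm0 : (0 < dimp d m)%N by rewrite dimpE muln_gt0 d0.
have := hyp _ (@powS R d K m) (@powS R d T m) dm0 (convex_pow cK) (sym_pow m sK)
  (convex_pow cT) (sym_pow m sT).
rewrite mink_pow inter_pow !gauss_pow -!EFinM lee_fin dimpE.
by rewrite !exprMn mulrA.
Qed.
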